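(* For every natural number $n\geq 2$, the $n$-Split Interval $S_n(I)$ is a Rosenthal compactum.
   Context: A Rosenthal compactum is a topological space homeomorphic to a compact subset of $\mathcal{B}_1(\mathbb{N}^{\mathbb{N}})$, the space of real-valued functions of the first Baire class on the Baire space $\mathbb{N}^{\mathbb{N}}$ (pointwise limits of sequences of continuous functions), endowed with the topology of pointwise convergence. Let $I=[0,1]$. For $n\geq 2$, $S_n(I)$ is the set $I\times\{0,\ldots,n-1\}$ with the topology in which the points $(x,i)$ with $i\in\{2,\ldots,n-1\}$ are isolated, a point $(x,0)$ with $x>0$ has basic neighbourhoods $\{(x,0)\}\cup\{(y,i): z_0<y<x,\ i\in\{0,\ldots,n-1\}\}$ for $z_0\in I$, $z_0<x$, a point $(x,1)$ with $x<1$ has basic neighbourhoods $\{(x,1)\}\cup\{(y,i): x<y<z_1,\ i\in\{0,\ldots,n-1\}\}$ for $z_1\in I$, $z_1>x$, and the points $(0,0)$ and $(1,1)$ are isolated. *)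

(* Defs.v *)
From HB Require Import structures.
From mathcomp Require Import all_boot all_order all_algebra.
From mathcomp Require Import all_classical all_reals.
From mathcomp Require Import topology normedtype.
Set Implicit Arguments. Unset Strict Implicit. Unset Printing Implicit Defensive.
Import Order.TTheory GRing.Theory Num.Theory.
Import numFieldNormedType.Exports.
Local Open Scope classical_set_scope.
Local Open Scope ring_scope.

Definition Iunit (R : realType) := {x : R | 0 <= x <= 1}.
HB.instance Definition _ (R : realType) := Choice.on (Iunit R).

Definition Split_carrier (R : realType) (n : nat) := (Iunit R * 'I_n)%type.
HB.instance Definition _ (R : realType) (n : nat) :=
  Choice.on (Split_carrier R n).

Definition Split_basic (R : realType) (n : nat) : set (set (Split_carrier R n)) :=
  fun A =>
    (exists (x : Iunit R) (i : 'I_n), (2 <= i)%N /\ A = [set (x, i)])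
 \/ (exists (x : Iunit R) (z0 : R), 0 < sval x /\ 0 <= z0 /\ z0 < sval x /\
       A = [set p | (p.1 = x /\ nat_of_ord p.2 = 0%N)
                    \/ (z0 < sval p.1 /\ sval p.1 < sval x)])
 \/ (exists (x : Iunit R) (z1 : R), sval x < 1 /\ z1 <= 1 /\ sval x < z1 /\
       A = [set p | (p.1 = x /\ nat_of_ord p.2 = 1%N)
                    \/ (sval x < sval p.1 /\ sval p.1 < z1)])
 \/ A = [set p | sval p.1 = 0 /\ nat_of_ord p.2 = 0%N]
 \/ A = [set p | sval p.1 = 1 /\ nat_of_ord p.2 = 1%N].

(** Since the
    basic sets form a base of neighbourhoods at every point (and are open in
    the described topology), this is exactly the topology of the paper. *)
HB.instance Definition _ (R : realType) (n : nat) :=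
  isSubBaseTopological.Build (Split_carrier R n) (@Split_basic R n) id.

Definition split_interval (R : realType) (n : nat) : topologicalType :=
  Split_carrier R n.

Definition baire_space : topologicalType := {ptws nat -> nat}.

Definition ptws_RBaire (R : realType) : topologicalType :=
  {ptws baire_space -> R}.

Definition baire_one (R : realType) : set (ptws_RBaire R) :=
  fun f => exists g : nat -> baire_space -> R,
    (forall k, continuous (g k)) /\
    (forall t : baire_space, (fun k => g k t) @ \oo --> (f t : R)).

Definition rosenthal_compactum (R : realType) (X : topologicalType) : Prop :=
  exists (K : set (ptws_RBaire R)) (f : X -> ptws_RBaire R),
    [/\ K `<=` @baire_one R, compact K, f @` setT = K &
       [/\ injective f, continuous f &
        (forall U : set X, open U ->
           exists V : set (ptws_RBaire R), open V /\ f @` U = V `&` K)]].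

(* Main.v *)
Require Import Defs.
From HB Require Import structures.
From mathcomp Require Import all_boot all_order all_algebra.
From mathcomp Require Import all_classical all_reals.
From mathcomp Require Import topology normedtype.

From mathcomp Require Import finmap lra zify.
Set Implicit Arguments. Unset Strict Implicit. Unset Printing Implicit Defensive.
Import Order.TTheory GRing.Theory Num.Theory.
Import numFieldNormedType.Exports.
Local Open Scope classical_set_scope.
Local Open Scope ring_scope.
Section Reals.
Variable R : realType.

Definition w (m : nat) : R := ((2:R) ^+ m)^-1.

Lemma w_gt0 m : 0 < w m.
Proof. by rewrite /w invr_gt0 exprn_gt0. Qed.

Lemma wS m : w m.+1 = w m / 2.
Proof. by rewrite /w exprS invfM mulrC. Qed.

Lemma w0 : w 0 = 1.
Proof. by rewrite /w expr0 invr1. Qed.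

Lemma wSS m : w m.+1 + w m.+1 = w m.
Proof. rewrite wS; have := w_gt0 m; lra. Qed.

Lemma w_anti m k : (m <= k)%N -> w k <= w m.
Proof.
move=> /subnK <-; elim: (k - m)%N => [|j IH]; first by rewrite add0n.
rewrite addSn wS; apply: le_trans IH; have := w_gt0 (j + m)%N; lra.
Qed.

Lemma w_small (e : R) : 0 < e -> exists M, w M < e.
Proof.
move=> e0.
have [M HM] : exists M : nat, e^-1 < M%:R.
  exists (Num.truncn (e^-1)).+1. by rewrite truncnS_gt.
exists M.
have HM2 : (M%:R : R) <= 2 ^+ M.
  rewrite -natrX ler_nat; apply: ltnW; exact: ltn_expl.
have M0 : 0 < (M%:R : R) by apply: le_lt_trans HM; rewrite invr_ge0 ltW.
rewrite /w -(invrK e) ltf_pV2 ?posrE ?exprn_gt0 ?invr_gt0 //.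
exact: lt_le_trans HM HM2.
Qed.

Lemma le_w (a b : R) : (forall m, a <= b + w m) -> a <= b.
Proof.
move=> H; rewrite leNgt; apply/negP => ba.
have [M HM] : exists M, w M < a - b by apply: w_small; rewrite subr_gt0.
by have := H M; lra.
Qed.

Definition pm (t : nat -> nat) (m : nat) : R :=
  \sum_(k < m) (if (0 < t k)%N then w k.+1 else 0).

Lemma pm0 t : pm t 0 = 0.
Proof. by rewrite /pm big_ord0. Qed.

Lemma pmS t m : pm t m.+1 = pm t m + (if (0 < t m)%N then w m.+1 else 0).
Proof. by rewrite /pm big_ord_recr. Qed.

Lemma pm_step t m : pm t m <= pm t m.+1 /\ pm t m.+1 + w m.+1 <= pm t m + w m.
Proof.
rewrite pmS; have := wSS m; have := w_gt0 m.+1; case: ifP => _; lra.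
Qed.

Lemma pm_mono t m k : (m <= k)%N -> pm t m <= pm t k /\ pm t k + w k <= pm t m + w m.
Proof.
move=> /subnK <-; elim: (k - m)%N => [|j [IH1 IH2]]; first by rewrite add0n.
rewrite addSn; have [h1 h2] := pm_step t (j + m).
split; lra.
Qed.

Lemma pm_ge0 t m : 0 <= pm t m.
Proof. by have [+ _] := pm_mono t (leq0n m); rewrite pm0. Qed.

Lemma pm_le1 t m : pm t m + w m <= 1.
Proof. by have [_ +] := pm_mono t (leq0n m); rewrite pm0 w0 add0r. Qed.

Definition phi (t : nat -> nat) : R := sup (range (pm t)).

Lemma has_sup_pm t : has_sup (range (pm t)).
Proof.
split; first by exists (pm t 0), 0%N.
exists 1 => _ [m _ <-]; have := pm_le1 t m; have := w_gt0 m; lra.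
Qed.

Lemma phi_lb t m : pm t m <= phi t.
Proof. by apply: sup_upper_bound; [exact: has_sup_pm|exists m]. Qed.

Lemma phi_ub t m : phi t <= pm t m + w m.
Proof.
apply: ge_sup; first by exists (pm t 0), 0%N.
move=> _ [k _ <-]; have [km|mk] := leqP k m.
  have [h _] := pm_mono t km; have := w_gt0 m; lra.
have [_ h] := pm_mono t (ltnW mk); have := w_gt0 k; lra.
Qed.

Lemma phi_ge0 t : 0 <= phi t.
Proof. by apply: le_trans (phi_lb t 0); rewrite pm0. Qed.

Lemma phi_le1 t : phi t <= 1.
Proof. by have := phi_ub t 0; rewrite pm0 w0 add0r. Qed.

Fixpoint remS (s : R) (k : nat) : R :=
  match k with
  | 0 => s
  | k'.+1 => if w k'.+1 <= remS s k' then remS s k' - w k'.+1 else remS s k'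
  end.

Definition ttS (s : R) : nat -> nat := fun k => if w k.+1 <= remS s k then 1%N else 0%N.

Lemma rem_inv s k : 0 <= s <= 1 ->
  [/\ 0 <= remS s k, remS s k <= w k & pm (ttS s) k + remS s k = s].
Proof.
move=> /andP [s0 s1]; elim: k => [|k [h0 h1 h2]].
  by rewrite /= w0 pm0 add0r.
rewrite /= pmS /ttS; have := wSS k; case: ifP => H /=; split; lra.
Qed.

Lemma phi_tt s : 0 <= s <= 1 -> phi (ttS s) = s.
Proof.
move=> s01; apply/eqP; rewrite eq_le; apply/andP; split.
  apply: le_w => m; have [h0 h1 h2] := rem_inv m s01; have := phi_ub (ttS s) m; lra.
apply: le_w => m; have [h0 h1 h2] := rem_inv m s01.
have := phi_lb (ttS s) m; lra.
Qed.

End Reals.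
Arguments pm {R}.
Arguments phi {R}.
Arguments w {R}.
Arguments phi_lb {R}.
Arguments phi_ub {R}.
Section Baire.
Variable R : realType.

Definition H (x : R) (i : nat) (s : R) : R :=
  if s < x then 1 else if s == x then i%:R else 0.

Definition Gm (m : nat) (x : R) (i : nat) (t : nat -> nat) : R :=
  if pm t m + w m < x then 1
  else if (pm t m <= x) && (x <= pm t m + w m) then i%:R else 0.

Lemma G_cvg x i t : exists M, forall m, (M <= m)%N -> Gm m x i t = H x i (phi t).
Proof.
rewrite /Gm /H.
have [lt|gt|eq] := ltgtP (phi t) x.
- have [M HM] : exists M, w M < x - phi t by apply: w_small; rewrite subr_gt0.
  exists M => m Mm; have h1 := w_anti R Mm; have h2 := phi_lb (R:=R) t m.
  case: ifP => // /negbT; rewrite -leNgt => h3. exfalso; lra.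
- have [M HM] : exists M, w M < phi t - x by apply: w_small; rewrite subr_gt0.
  exists M => m Mm; have h1 := w_anti R Mm; have h2 := phi_ub (R:=R) t m.
  have h4 := phi_lb (R:=R) t m.
  try rewrite (gt_eqF gt).
  case: ifP => [h|_]; first by exfalso; lra.
  case: ifP => // /andP [h5 _]; exfalso; lra.
- exists 0%N => m _; have h1 := phi_ub (R:=R) t m; have h2 := phi_lb (R:=R) t m; try rewrite eq eqxx.
  try rewrite -eq.
  case: ifP => [h|_]; first by exfalso; lra.
  case: ifP => // /negbT; rewrite negb_and -!ltNge => /orP [] ?; exfalso; lra.
Qed.

Lemma proj_near (t : baire_space) (k : nat) : \forall s \near t, s k = t k.
Proof.
have : {ptws, nbhs t --> t} by [].
move/(pointwise_cvgP _ _) => /(_ k) h.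
by apply: (h [set t k]).
Qed.

Lemma pm_near (t : baire_space) (m : nat) : \forall s \near t, pm (R:=R) s m = pm t m.
Proof.
elim: m => [|m IH]; first by apply: filterE => s; rewrite !pm0.
apply: filterS (filterI IH (proj_near t m)) => s [h1 h2].
by rewrite !pmS h1 h2.
Qed.

Lemma baire_H x i : @baire_one R (fun t : baire_space => H x i (phi t)).
Proof.
exists (fun m => Gm m x i); split.
  move=> m t W /= HW.
  apply: filterS (pm_near t m) => s hs.
  by rewrite /= /Gm hs; have := nbhs_singleton HW.
move=> t; apply: cvg_near_cst.
have [M HM] := G_cvg x i t.
by exists M => // m /= Mm; apply: HM.
Qed.
End Baire.
Section Hlem.
Variable R : realType.
Implicit Types (y s : R) (j : nat).

Lemma natr_cases j : j = 0%N \/ j = 1%N \/ (2%:R <= (j%:R : R) /\ (2 <= j)%N).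
Proof. case: j => [|[|j]]; [by left|by right; left|right; right].
by rewrite ler_nat. Qed.

Lemma Hlt y j s : H y j s < 1/2 <-> (y < s \/ (y = s /\ j = 0%N)).
Proof.
rewrite /H; case: (ltgtP s y) => h.
- split => [h1|[h1|[h1 _]]]; exfalso; lra.
- by split => [_|_]; [left|lra].
- subst; have [->|[->|[h1 h2]]] := natr_cases j.
  + by split => [_|_]; [right|lra].
  + split => [h1|[h1|[h1 h2]]]; exfalso; [lra|done|done].
  + split => [h3|[h3|[h3 h4]]]; exfalso; [lra|done|by move: h2; rewrite h4].
Qed.

Lemma Hgt y j s : 1/2 < H y j s <-> (s < y \/ (s = y /\ (0 < j)%N)).
Proof.
rewrite /H; case: (ltgtP s y) => h.
- by split => [_|_]; [left|lra].
- split => [h1|[h1|[h1 _]]]; exfalso; lra.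
- subst; have [->|[->|[h1 h2]]] := natr_cases j.
  + split => [h1|[h1|[h1 h2]]]; exfalso; [lra|done|done].
  + by split => [_|_]; [right|lra].
  + by split => [_|_]; [right; split => //; lia|lra].
Qed.

Lemma Hone y j s : 1/2 < H y j s < 3/2 <-> (s < y \/ (s = y /\ j = 1%N)).
Proof.
rewrite /H; case: (ltgtP s y) => h.
- by split => [_|_]; [left|lra].
- split => [h1|[h1|[h1 _]]]; exfalso; lra.
- subst; have [->|[->|[h1 h2]]] := natr_cases j.
  + split => [h1|[h1|[h1 h2]]]; exfalso; [lra|done|done].
  + by split => [_|_]; [right|lra].
  + split => [h3|[h3|[h3 h4]]]; exfalso; [lra|done|by move: h2; rewrite h4].
Qed.

Lemma Hi y j s (i : nat) : (2 <= i)%N ->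
  (i%:R - 1/2 < H y j s < i%:R + 1/2 <-> (s = y /\ j = i)).
Proof.
move=> i2; have i2' : (2%:R : R) <= i%:R by rewrite ler_nat.
rewrite /H; case: (ltgtP s y) => h.
- split => [h1|[h1 _]]; exfalso; lra.
- split => [h1|[h1 _]]; exfalso; lra.
- split => [/andP [h1 h2]|[_ ->]]; last lra.
  split => //; apply/eqP; rewrite eqn_leq; apply/andP; split.
  + rewrite leqNgt; apply/negP => ij.
    have : ((i.+1)%:R : R) <= j%:R by rewrite ler_nat.
    rewrite -addn1 natrD; lra.
  + rewrite leqNgt; apply/negP => ij.
    have : ((j.+1)%:R : R) <= i%:R by rewrite ler_nat.
    rewrite -addn1 natrD; lra.
Qed.
End Hlem.
Section Top.
Variables (R : realType) (n : nat).
Local Notation X := (split_interval R n).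
Local Notation P := (ptws_RBaire R).

Definition fmap (p : X) : P := fun t => H (sval p.1) (val p.2) (phi t).

Lemma f_tt (p : X) s : 0 <= s <= 1 -> fmap p (ttS s) = H (sval p.1) (val p.2) s.
Proof. by move=> s01; rewrite /fmap phi_tt. Qed.

Definition Ev (s : R) (O : set R) : set P := [set g : P | O (g (ttS s))].

Lemma Ev_open s O : open O -> open (Ev s O).
Proof.
move=> oO; apply: (@open_comp _ _ (fun g : P => g (ttS s))) => // g _.
have : {ptws, nbhs g --> g} by [].
by move/(pointwise_cvgP _ _) => /(_ (ttS s)).
Qed.

Lemma open_band (c d : R) : open [set a : R | c < a < d].
Proof.
rewrite (_ : [set a : R | c < a < d] = [set a | c < a] `&` [set a | a < d]).
  by apply: openI; [apply: open_gt|apply: open_lt].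
by apply/seteqP; split => a /=; [move/andP|move=> [-> ->]].
Qed.

Lemma Iunit01 (x : Iunit R) : 0 <= sval x <= 1.
Proof. exact: (svalP x). Qed.

Lemma good_basic (S : set X) : Split_basic S ->
  exists V : set P, open V /\ fmap @^-1` V = S.
Proof.
case=> [[x [i [i2 ->]]]|[[x [z0 [x0 [z00 [z0x ->]]]]]|[[x [z1 [x1 [z11 [xz1 ->]]]]]|[->|->]]]].
- exists (Ev (sval x) [set a | i%:R - 1/2 < a < i%:R + 1/2]); split.
    by apply: Ev_open; apply: open_band.
  apply/seteqP; split => [[y j] /=|q /= ->].
    rewrite /Ev /= f_tt ?Iunit01 // Hi // => -[h1 h2].
    by congr pair; apply: val_inj.
  by rewrite /Ev /= f_tt ?Iunit01 // Hi.
- have x01 := Iunit01 x.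
  exists ((\bigcup_(z in [set z | z0 < z < sval x]) Ev z [set a | 1/2 < a])
          `&` Ev (sval x) [set a | a < 1/2]); split.
    apply: openI; last by apply: Ev_open; apply: open_lt.
    by apply: bigcup_open => z _; apply: Ev_open; apply: open_gt.
  apply/seteqP; split => [[y j] /= [[z /andP [zz0 zx]]]|[y j] /=].
    rewrite /Ev /= f_tt ?Iunit01; last by apply/andP; split; lra.
    rewrite Hgt f_tt ?Iunit01 // Hlt => hz [yx|[yx j0]].
      by right; split => //; case: hz => [|[]]; lra.
    by left; split => //; apply: val_inj.
  have y01 := Iunit01 y.
  case=> [[-> j0]|[zy yx]].
    split.
      exists ((z0 + sval x)/2); first by apply/andP; split; lra.
      rewrite /Ev /= f_tt; last by apply/andP; split; lra.
      by rewrite Hgt /=; left; lra.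
    by rewrite /Ev /= f_tt ?Iunit01 // Hlt /=; right.
  split.
    exists ((z0 + sval y)/2); first by apply/andP; split; lra.
    rewrite /Ev /= f_tt; last by apply/andP; split; lra.
    by rewrite Hgt /=; left; lra.
  by rewrite /Ev /= f_tt ?Iunit01 // Hlt /=; left.
- have x01 := Iunit01 x.
  exists (Ev (sval x) [set a | 1/2 < a < 3/2] `&`
          (\bigcup_(z in [set z | sval x < z < z1]) Ev z [set a | a < 1/2])); split.
    apply: openI; first by apply: Ev_open; apply: open_band.
    by apply: bigcup_open => z _; apply: Ev_open; apply: open_lt.
  apply/seteqP; split => [[y j] /= [+ [z /andP [xz zz1]]]|[y j] /=].
    rewrite /Ev /= f_tt ?Iunit01 // Hone => hx.
    rewrite f_tt; last by apply/andP; split; lra.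
    rewrite Hlt => hz; case: hx => [xy|[xy j1]].
      by right; split => //; case: hz => [|[]]; lra.
    by left; split => //; apply: val_inj.
  have y01 := Iunit01 y.
  case=> [[-> j1]|[xy yz]].
    split; first by rewrite /Ev /= f_tt ?Iunit01 // Hone /=; right.
    exists ((sval x + z1)/2); first by apply/andP; split; lra.
    rewrite /Ev /= f_tt; last by apply/andP; split; lra.
    by rewrite Hlt /=; left; lra.
  split; first by rewrite /Ev /= f_tt ?Iunit01 // Hone /=; left.
  exists ((sval y + z1)/2); first by apply/andP; split; lra.
  rewrite /Ev /= f_tt; last by apply/andP; split; lra.
  by rewrite Hlt /=; left; lra.
- exists (Ev 0 [set a | a < 1/2]); split; first by apply: Ev_open; apply: open_lt.
  apply/seteqP; split => [[y j] /=|[y j] /= [y0 j0]].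
    rewrite /Ev /= f_tt; last by rewrite lexx ler01.
    have := Iunit01 y; rewrite Hlt => /andP [y0 y1] [h|[h1 h2]]; [exfalso; lra|done].
  rewrite /Ev /= f_tt; last by rewrite lexx ler01.
  by rewrite Hlt; right.
- exists (Ev 1 [set a | 1/2 < a < 3/2]); split; first by apply: Ev_open; apply: open_band.
  apply/seteqP; split => [[y j] /=|[y j] /= [y0 j0]].
    rewrite /Ev /= f_tt; last by rewrite lexx ler01.
    have := Iunit01 y; rewrite Hone => /andP [y0 y1] [h|[h1 h2]]; [exfalso; lra|done].
  rewrite /Ev /= f_tt; last by rewrite lexx ler01.
  by rewrite Hone; right.
Qed.
End Top.
Section Top2.
Variables (R : realType) (n : nat).
Local Notation X := (split_interval R n).
Local Notation P := (ptws_RBaire R).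

Lemma basic_open (S : set X) : Split_basic S -> open S.
Proof.
move=> bS.
exists [set S]; last by rewrite bigcup_set1.
move=> _ ->. exact: (@finI_from1 _ _ (@Split_basic R n) id).
Qed.

Lemma nbhs_basic (p : X) (U : set X) : nbhs p U ->
  exists D' : {fset set X}, [/\ {subset D' <= Split_basic (R:=R) (n:=n)},
    (forall S, S \in D' -> S p) & \bigcap_(S in [set` D']) S `<=` U].
Proof.
case=> B [[I Irp] <-] [W IW Wp] IU.
have := Irp _ IW. case=> F rayF eq.
exists F; split.
- exact: rayF.
- by move=> S SF; move: Wp; rewrite -eq; apply.
- by move=> q Fq; apply: IU; exists W => //; rewrite -eq.
Qed.

Lemma good_seq (s : seq (set X)) : (forall S, S \in s -> Split_basic S) ->
  exists V : set P, open V /\ (@fmap R n) @^-1` V = [set q | forall S, S \in s -> S q].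
Proof.
elim: s => [|S s IH] hs.
  exists setT; split; first exact: openT.
  by apply/seteqP; split => q //= _ S; rewrite in_nil.
have [V1 [o1 e1]] := good_basic (hs S (mem_head _ _)).
have [V2 [o2 e2]] : exists V : set P, open V /\ (@fmap R n) @^-1` V = [set q | forall S, S \in s -> S q].
  by apply: IH => S' hS'; apply: hs; rewrite in_cons hS' orbT.
exists (V1 `&` V2); split; first exact: openI.
rewrite preimage_setI e1 e2; apply/seteqP; split => q /=.
  by move=> [h1 h2] S'; rewrite in_cons => /orP [/eqP ->|/h2].
by move=> h; split; [apply: h; rewrite mem_head|move=> S' hS'; apply: h; rewrite in_cons hS' orbT].
Qed.

Lemma f_open (U : set X) : open U ->
  exists V : set P, open V /\ (@fmap R n) @` U = V `&` (@fmap R n) @` setT.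
Proof.
move=> oU.
exists (\bigcup_(W in [set W : set P | open W /\ (@fmap R n) @^-1` W `<=` U]) W); split.
  by apply: bigcup_open => W [].
apply/seteqP; split => [_ [p Up <-]|g [[W [oW WU] Wg] [q _ gq]]]; last first.
  by exists q => //; apply: WU; rewrite /= gq.
  split; last by exists p.
  have : nbhs p U by apply: open_nbhs_nbhs; split.
  move=> /nbhs_basic [D' [Dsub Dp DU]].
  have [V [oV eV]] := good_seq (s := D') (fun S hS => set_mem (Dsub S hS)).
  exists V.
    split => // q; rewrite eV /= => hq; apply: DU => S hS; exact: hq.
  by rewrite -[V (fmap p)]/(((@fmap R n) @^-1` V) p) eV /= => S hS; apply: Dp.
Qed.

Lemma H_lt (y : R) j s : s < y -> H y j s = 1.
Proof. by move=> h; rewrite /H h. Qed.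
Lemma H_gt (y : R) j s : y < s -> H y j s = 0.
Proof. by move=> h; rewrite /H ltNge (ltW h) /= gt_eqF. Qed.
Lemma H_eq (y : R) j : H y j y = j%:R.
Proof. by rewrite /H ltxx eqxx. Qed.

Lemma f_inj : injective (@fmap R n).
Proof.
move=> [[x hx] i] [[y hy] j] E.
have e s : 0 <= s <= 1 -> H x i s = H y j s.
  move=> s01; have := congr1 (fun g : P => g (ttS s)) E.
  by rewrite /= !f_tt.
move/andP: (hx) => [x0 x1]; move/andP: (hy) => [y0 y1].
have [xy|yx|xy] := ltgtP x y.
- have h : 0 <= (x + y)/2 <= 1 by apply/andP; split; lra.
  have := e _ h; rewrite (@H_gt x i ((x+y)/2)); last lra.
  rewrite (@H_lt y j ((x+y)/2)); last lra.
  by move/eqP; rewrite eq_sym oner_eq0.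
- have h : 0 <= (x + y)/2 <= 1 by apply/andP; split; lra.
  have := e _ h; rewrite (@H_lt x i ((x+y)/2)); last lra.
  rewrite (@H_gt y j ((x+y)/2)); last lra.
  by move/eqP; rewrite oner_eq0.
- subst y; have := e x hx; rewrite !H_eq => /eqP; rewrite eqr_nat => /eqP ij.
  by congr pair; apply: val_inj.
Qed.
End Top2.
Section Top3.
Variables (R : realType) (n : nat).
Local Notation X := (split_interval R n).
Local Notation P := (ptws_RBaire R).

Lemma loc_const (p : X) (t : baire_space) : exists S : set X,
  [/\ Split_basic S, S p & forall q, S q -> fmap q t = fmap p t].
Proof.
case: p => [[x hx] j]; set X0 := exist _ x hx.
rewrite /fmap /=; set s := phi t.
have s0 : 0 <= s by apply: phi_ge0.
have s1 : s <= 1 by apply: phi_le1.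
move/andP: (hx) => [x0 x1].
have : (val j = 0 \/ val j = 1 \/ 2 <= val j)%N by lia.
case=> [j0|[j1|j2]].
- have [xp|xn] := ltrP 0 x; last first.
    have x00 : x = 0 by apply: le_anti; rewrite xn x0.
    exists [set q : X | sval q.1 = 0 /\ val q.2 = 0%N]; split.
    + by right; right; right; left.
    + by split.
    + by move=> [[y hy] k] /= [-> ->]; rewrite x00 j0.
  have [sx|xs] := ltrP s x.
    exists [set q : X | (q.1 = X0 /\ val q.2 = 0%N) \/ (s < sval q.1 /\ sval q.1 < sval X0)]; split.
    + by right; left; exists X0, s; split.
    + by left.
    + move=> [[y hy] k] /= [[/(congr1 sval) /= -> k0]|[sy yx]] /=; first by rewrite k0 j0.
      by rewrite !H_lt.
  exists [set q : X | (q.1 = X0 /\ val q.2 = 0%N) \/ (0 < sval q.1 /\ sval q.1 < sval X0)]; split.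
  + by right; left; exists X0, 0; split.
  + by left.
  + move=> [[y hy] k] /= [[/(congr1 sval) /= -> k0]|[sy yx]] /=; first by rewrite k0 j0.
    rewrite (@H_gt _ y); last lra.
    move: xs; rewrite le_eqVlt => /orP [/eqP <-|xs]; first by rewrite H_eq j0.
    by rewrite H_gt.
- have [xp|xn] := ltrP x 1; last first.
    have x00 : x = 1 by apply: le_anti; rewrite xn x1.
    exists [set q : X | sval q.1 = 1 /\ val q.2 = 1%N]; split.
    + by right; right; right; right.
    + by split.
    + by move=> [[y hy] k] /= [-> ->]; rewrite x00 j1.
  have [xs|sx] := ltrP x s.
    exists [set q : X | (q.1 = X0 /\ val q.2 = 1%N) \/ (sval X0 < sval q.1 /\ sval q.1 < s)]; split.
    + by right; right; left; exists X0, s; split.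
    + by left.
    + move=> [[y hy] k] /= [[/(congr1 sval) /= -> k0]|[sy yx]] /=; first by rewrite k0 j1.
      by rewrite !H_gt.
  exists [set q : X | (q.1 = X0 /\ val q.2 = 1%N) \/ (sval X0 < sval q.1 /\ sval q.1 < 1)]; split.
  + by right; right; left; exists X0, 1; split.
  + by left.
  + move=> [[y hy] k] /= [[/(congr1 sval) /= -> k0]|[sy yx]] /=; first by rewrite k0 j1.
    rewrite (@H_lt _ y); last lra.
    move: sx; rewrite le_eqVlt => /orP [/eqP ->|sx]; first by rewrite H_eq j1.
    by rewrite H_lt.
- exists [set (X0, j)]; split => //.
  + by left; exists X0, j.
  + by move=> q ->.
Qed.

Lemma f_cont : continuous (@fmap R n).
Proof.
move=> p.
have FF : Filter ((@fmap R n) @ nbhs p) by apply: fmap_filter.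
apply/(@pointwise_cvgP _ _ _ _ FF) => t.
have [S [bS Sp hS]] := loc_const p t.
move=> W /= HW; apply: filterS (open_nbhs_nbhs (conj (basic_open bS) Sp)) => q Sq /=.
by rewrite hS //; apply: nbhs_singleton.
Qed.
End Top3.
Section Compact.
Variables (R : realType) (n : nat) (hn : (1 < n)%N).
Local Notation X := (split_interval R n).

Lemma X_compact : compact (setT : set X).
Proof.
rewrite compact_ultra => F UF _.
have PF : ProperFilter F by apply: ultra_proper.
have FF : Filter F := @filter_filter _ F PF.
pose A := [set y : R | F [set q : X | y <= sval q.1]].
have A0 : A 0.
  by apply: filterS filterT => q _; have /andP [] := Iunit01 q.1.
have Aub : ubound A 1.
  move=> y Ay; rewrite leNgt; apply/negP => y1.
  have : F set0 by apply: filterS Ay => q /= h; have /andP [_ ?] := Iunit01 q.1; lra.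
  exact: filter_not_empty.
have hsA : has_sup A by split; [exists 0|exists 1].
pose xs := sup A.
have xs0 : 0 <= xs by apply: sup_upper_bound.
have xs1 : xs <= 1 by apply: ge_sup => //; exists 0.
have F1 : forall y, y < xs -> F [set q : X | y < sval q.1].
  move=> y /(sup_gt (ex_intro _ 0 A0)) [z Az yz].
  by apply: filterS Az => q /= h; lra.
have F2 : forall y, xs < y -> F [set q : X | sval q.1 < y].
  move=> y xy; have [Ay|nAy] := in_ultra_setVsetC [set q : X | y <= sval q.1] UF.
    have := sup_upper_bound hsA Ay; rewrite -/xs; lra.
  move: nAy; apply: filterS => q /= /negP; by rewrite -ltNge.
have xs01 : 0 <= xs <= 1 by rewrite xs0 xs1.
pose X0 : Iunit R := exist _ xs xs01.
have cvg_basic : forall p : X, (forall S, Split_basic S -> S p -> F S) -> F --> p.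
  move=> p hp U /nbhs_basic [D' [Dsub Dp DU]]. change (F U); apply: (filterS DU).
  by apply: filter_bigI => S SD; apply: hp; [exact: set_mem (Dsub S SD)|exact: Dp].
have [Flt|Fge] := in_ultra_setVsetC [set q : X | sval q.1 < xs] UF.
  exists (X0, Ordinal (ltnW hn)); split => //; apply: cvg_basic => S bS Sp.
  case: bS Sp => [[x [i [i2 ->]]]|[[x [z0 [x0 [z00 [z0x ->]]]]]|[[x [z1 [x1 [z11 [xz1 ->]]]]]|[->|->]]]] /=.
  - by case=> _ e; rewrite -e in i2.
  - move=> Sp0; have hz : z0 < xs /\ xs <= sval x.
      case: Sp0 => [[e _]|[h1 h2]]; last by split; lra.
      by rewrite -e /= in z0x *; split; lra.
    apply: (filterS _ (filterI (F1 z0 hz.1) Flt)) => q /= [h1 h2]; right; split; lra.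
  - case=> [[_ //]|[h1 h2]].
    apply: (filterS _ (filterI (F1 (sval x) h1) Flt)) => q /= [h3 h4]; right; split; lra.
  - case=> h1 _; apply: (filterS _ Flt) => q /= h; exfalso.
    have /andP [] := Iunit01 q.1; lra.
  - by case.
have [Fgt|Fle] := in_ultra_setVsetC [set q : X | xs < sval q.1] UF.
  exists (X0, Ordinal hn); split => //; apply: cvg_basic => S bS Sp.
  case: bS Sp => [[x [i [i2 ->]]]|[[x [z0 [x0 [z00 [z0x ->]]]]]|[[x [z1 [x1 [z11 [xz1 ->]]]]]|[->|->]]]] /=.
  - by case=> _ e; rewrite -e in i2.
  - case=> [[_ //]|[h1 h2]].
    apply: (filterS _ (filterI Fgt (F2 (sval x) h2))) => q /= [h3 h4]; right; split; lra.
  - move=> Sp0; have hz : sval x <= xs /\ xs < z1.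
      case: Sp0 => [[e _]|[h1 h2]]; last by split; lra.
      by rewrite -e /= in xz1 *; split; lra.
    apply: (filterS _ (filterI Fgt (F2 z1 hz.2))) => q /= [h3 h4]; right; split; lra.
  - by case.
  - case=> h1 _; apply: (filterS _ Fgt) => q /= h; exfalso.
    have /andP [] := Iunit01 q.1; lra.
have Feq : F [set q : X | sval q.1 = xs].
  apply: (filterS _ (filterI Fge Fle)) => q /= [/negP h1 /negP h2].
  by apply: le_anti; rewrite -!leNgt in h1 h2; rewrite h1 h2.
have claim : forall m, F [set q : X | sval q.1 = xs /\ (val q.2 < m)%N] ->
    exists i, F [set q : X | sval q.1 = xs /\ q.2 = i].
  elim => [|m IH] h.
    exfalso; apply: (@filter_not_empty _ F PF).
    by apply: (filterS _ h) => q /= [].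
  have [Fm|Fnm] := in_ultra_setVsetC [set q : X | val q.2 = m] UF.
    have Fi := @filterI _ F FF _ _ h Fm.
    have [q0 [[e0 _] e1]] := @filter_ex _ F PF _ Fi.
    exists q0.2; apply: (filterS _ Fi) => q /= [[a _] b]; split => //.
    by apply: val_inj; move: b e1 => /= -> ->.
  apply: IH; apply: (filterS _ (filterI h Fnm)) => q /= [[a b] c]; split => //.
  move: b c; rewrite ltnS leq_eqVlt => /orP [/eqP //|//].
have [i Fi] : exists i, F [set q : X | sval q.1 = xs /\ q.2 = i].
  by apply: (claim n); apply: (filterS _ Feq) => q /= e; split => //; apply: ltn_ord.
exists (X0, i); split => // U hU; change (F U).
apply: (filterS _ Fi) => -[[y hy] j] /= [e1 e2].
have -> : (exist _ y hy, j) = (X0, i) :> X by congr pair; [apply: val_inj|].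
exact: nbhs_singleton hU.
Qed.

End Compact.
Theorem mainTheorem5 (R : realType) (n : nat) (hn : (2 <= n)%N) :
  rosenthal_compactum R (split_interval R n).
Proof.
exists ((@fmap R n) @` setT), (@fmap R n); split => //.
- by move=> _ [p _ <-]; apply: baire_H.
- apply: continuous_compact; last exact: X_compact.
  by apply: continuous_subspaceT; exact: f_cont.
- split; [exact: f_inj|exact: f_cont|exact: f_open].
Qed.
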